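(* Let $H$ be a Hopf algebra that is projective as a module over the commutative ring $k$. The following are equivalent: (1) the forgetful functor $F:{}^H\mathcal L_H\to\mathcal M_H$ is separable; (2) there exists a $k$-linear map $\gamma:H\to\mathrm{End}_k(H)$ that is right $H^*$-linear, i.e. $\gamma(h\leftharpoonup h^* )=\gamma(h)\circ(h^*\rightharpoonup -)$ for all $h\in H$, $h^*\in H^*$, such that $\gamma(h)(H)\subseteq Z(H)$ and $\sum\gamma(h_{(1)})(h_{(2)})=\varepsilon(h)1_H$ for all $h\in H$.
   Context: Sweedler notation $\Delta(h)=\sum h_{(1)}\otimes h_{(2)}$, $\rho(m)=\sum m_{<-1>}\otimes m_{<0>}$. ${}^H\mathcal L_H$ (Long dimodules) is the category of right $H$-modules $M$ with a left $H$-comodule structure such that $\rho(mh)=\sum m_{<-1>}\otimes m_{<0>}h$ for all $m,h$, with $H$-linear $H$-colinear maps; $F$ forgets the coaction. $h\leftharpoonup h^*=\sum\langle h^*,h_{(1)}\rangle h_{(2)}$ and $h^*\rightharpoonup l=\sum\langle h^*,l_{(2)}\rangle l_{(1)}$. $Z(H)$ is the center of $H$. A functor is separable if $\mathrm{Hom}(M,N)\to\mathrm{Hom}(FM,FN)$ has a left inverse natural in $M,N$. *)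

(* Defs.v *)
(* Tensor products are represented by finite lists of elementary tensors;
   two such lists denote the same element of the tensor product iff every
   multilinear map takes the same value on them (universal property). *)
From HB Require Import structures.
From mathcomp Require Import all_boot all_order all_algebra.
Set Implicit Arguments. Unset Strict Implicit. Unset Printing Implicit Defensive.
Import GRing.Theory.
Local Open Scope ring_scope.

Definition bilin (k : comNzRingType) (M N P : lmodType k) (b : M -> N -> P) :=
  (forall (a : k) x y n, b (a *: x + y) n = a *: b x n + b y n) /\
  (forall (a : k) m x y, b m (a *: x + y) = a *: b m x + b m y).

Definition trilin (k : comNzRingType) (M N Q P : lmodType k)
    (t : M -> N -> Q -> P) :=
  (forall (a : k) x y n q, t (a *: x + y) n q = a *: t x n q + t y n q) /\
  (forall (a : k) m x y q, t m (a *: x + y) q = a *: t m x q + t m y q) /\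
  (forall (a : k) m n x y, t m n (a *: x + y) = a *: t m n x + t m n y).

Definition teq (k : comNzRingType) (M N : lmodType k) (s s' : seq (M * N)) :=
  forall (P : lmodType k) (b : M -> N -> P), bilin b ->
    \sum_(p <- s) b p.1 p.2 = \sum_(p <- s') b p.1 p.2.

Definition tscale (k : comNzRingType) (M N : lmodType k) (a : k)
    (s : seq (M * N)) : seq (M * N) := [seq (a *: p.1, p.2) | p <- s].

(* H : algType k is a k-algebra; D is the comultiplication (Delta h given by a
   representative sum  \sum h_(1) (x) h_(2)), eps the counit, S the antipode. *)
Definition is_hopf (k : comNzRingType) (H : algType k)
    (D : H -> seq (H * H)) (eps : H -> k) (S : H -> H) : Prop :=
  (forall (a : k) x y, teq (D (a *: x + y)) (tscale a (D x) ++ D y)) /\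
  (* coassociativity : (Delta (x) id) Delta = (id (x) Delta) Delta *)
  (forall h (P : lmodType k) (t : H -> H -> H -> P), trilin t ->
     \sum_(p <- D h) \sum_(q <- D p.1) t q.1 q.2 p.2 =
     \sum_(p <- D h) \sum_(q <- D p.2) t p.1 q.1 q.2) /\
  (forall (a : k) x y, eps (a *: x + y) = a * eps x + eps y) /\
  (forall h, \sum_(p <- D h) eps p.1 *: p.2 = h) /\
  (forall h, \sum_(p <- D h) eps p.2 *: p.1 = h) /\
  (forall x y, teq (D (x * y)) [seq (p.1 * q.1, p.2 * q.2) | p <- D x, q <- D y]) /\
  teq (D 1) [:: (1, 1)] /\
  (forall x y, eps (x * y) = eps x * eps y) /\
  eps 1 = 1 /\
  (forall (a : k) x y, S (a *: x + y) = a *: S x + S y) /\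
  (forall h, \sum_(p <- D h) S p.1 * p.2 = eps h *: 1) /\
  (forall h, \sum_(p <- D h) p.1 * S p.2 = eps h *: 1).

Definition projective_module (k : comNzRingType) (V : lmodType k) : Prop :=
  forall (M N : lmodType k) (g : M -> N),
    (forall (a : k) x y, g (a *: x + y) = a *: g x + g y) ->
    (forall n, exists m, g m = n) ->
    forall f : V -> N,
    (forall (a : k) x y, f (a *: x + y) = a *: f x + f y) ->
    exists f' : V -> M,
      (forall (a : k) x y, f' (a *: x + y) = a *: f' x + f' y) /\
      (forall v, g (f' v) = f v).

Definition dimod_axioms (k : comNzRingType) (H : algType k)
    (D : H -> seq (H * H)) (eps : H -> k) (M : lmodType k)
    (act : M -> H -> M) (rho : M -> seq (H * M)) : Prop :=
  (forall (a : k) m m' h, act (a *: m + m') h = a *: act m h + act m' h) /\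
  (forall (a : k) m h h', act m (a *: h + h') = a *: act m h + act m h') /\
  (forall m, act m 1 = m) /\
  (forall m x y, act (act m x) y = act m (x * y)) /\
  (forall (a : k) m m', teq (rho (a *: m + m')) (tscale a (rho m) ++ rho m')) /\
  (forall m (P : lmodType k) (t : H -> H -> M -> P), trilin t ->
     \sum_(p <- rho m) \sum_(q <- D p.1) t q.1 q.2 p.2 =
     \sum_(p <- rho m) \sum_(q <- rho p.2) t p.1 q.1 q.2) /\
  (forall m, \sum_(p <- rho m) eps p.1 *: p.2 = m) /\
  (* Long compatibility: rho (m h) = \sum m_<-1> (x) m_<0> h *)
  (forall m h, teq (rho (act m h)) [seq (p.1, act p.2 h) | p <- rho m]).

Record dimod (k : comNzRingType) (H : algType k)
    (D : H -> seq (H * H)) (eps : H -> k) := Dimod {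
  dm_sort : lmodType k;
  dm_act : dm_sort -> H -> dm_sort;
  dm_rho : dm_sort -> seq (H * dm_sort);
  dm_ax : dimod_axioms D eps dm_act dm_rho }.

(* morphisms in M_H between F M and F N : k-linear, right H-linear *)
Definition hlin (k : comNzRingType) (H : algType k) (D : H -> seq (H * H))
    (eps : H -> k) (M N : dimod D eps) (f : dm_sort M -> dm_sort N) : Prop :=
  (forall (a : k) x y, f (a *: x + y) = a *: f x + f y) /\
  (forall m h, f (dm_act m h) = dm_act (f m) h).

(* morphisms in ^H L_H : moreover H-colinear *)
Definition dimor (k : comNzRingType) (H : algType k) (D : H -> seq (H * H))
    (eps : H -> k) (M N : dimod D eps) (f : dm_sort M -> dm_sort N) : Prop :=
  hlin f /\
  (forall m, teq (dm_rho (f m)) [seq (p.1, f p.2) | p <- dm_rho m]).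

Definition forgetful_separable (k : comNzRingType) (H : algType k)
    (D : H -> seq (H * H)) (eps : H -> k) : Prop :=
  exists P : forall M N : dimod D eps,
               (dm_sort M -> dm_sort N) -> (dm_sort M -> dm_sort N),
    (forall M N f, @hlin _ _ D eps M N f -> dimor (P M N f)) /\
    (forall M N f, @dimor _ _ D eps M N f -> P M N f =1 f) /\
    (forall (M M' N N' : dimod D eps) (g : dm_sort M' -> dm_sort M)
            (h : dm_sort N -> dm_sort N') (f : dm_sort M -> dm_sort N),
       dimor g -> dimor h -> hlin f ->
       P M' N' (h \o f \o g) =1 h \o P M N f \o g).

Definition klinear_form (k : comNzRingType) (H : algType k) (hs : H -> k) :=
  forall (a : k) x y, hs (a *: x + y) = a * hs x + hs y.

Definition rharp (k : comNzRingType) (H : algType k) (D : H -> seq (H * H))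
    (h : H) (hs : H -> k) : H := \sum_(p <- D h) hs p.1 *: p.2.

Definition lharp (k : comNzRingType) (H : algType k) (D : H -> seq (H * H))
    (hs : H -> k) (l : H) : H := \sum_(p <- D l) hs p.2 *: p.1.

Definition gamma_condition (k : comNzRingType) (H : algType k)
    (D : H -> seq (H * H)) (eps : H -> k) (gamma : H -> H -> H) : Prop :=
  (forall (a : k) x y l, gamma (a *: x + y) l = a *: gamma x l + gamma y l) /\
  (forall h (a : k) x y, gamma h (a *: x + y) = a *: gamma h x + gamma h y) /\
  (forall h (hs : H -> k), klinear_form hs ->
     forall l, gamma (rharp D h hs) l = gamma h (lharp D hs l)) /\
  (forall h l x, gamma h l * x = x * gamma h l) /\
  (forall h, \sum_(p <- D h) gamma p.1 p.2 = eps h *: 1).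

(* Main.v *)
Require Import Defs.
From HB Require Import structures.
From mathcomp Require Import all_boot all_order all_algebra.
From mathcomp Require Import boolp.
From mathcomp Require finmap.
From mathcomp.multinomials Require monalg.
Set Implicit Arguments. Unset Strict Implicit. Unset Printing Implicit Defensive.
Import GRing.Theory.
Local Open Scope ring_scope.

Section Lin.
Variable k : comNzRingType.

Definition lin (M N : lmodType k) (f : M -> N) :=
  forall (a : k) x y, f (a *: x + y) = a *: f x + f y.

Variables (M N : lmodType k) (f : M -> N).
Hypothesis Hf : lin f.

Lemma lin0 : f 0 = 0.
Proof.
have E := Hf 1 0 0; rewrite !scale1r addr0 in E.
by apply: (addrI (f 0)); rewrite addr0 -E.
Qed.
Lemma linD x y : f (x + y) = f x + f y.
Proof. by have := Hf 1 x y; rewrite !scale1r. Qed.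
Lemma linZ a x : f (a *: x) = a *: f x.
Proof. by have := Hf a x 0; rewrite !addr0 lin0 addr0. Qed.
Lemma lin_sum (I : Type) (r : seq I) (F : I -> M) :
  f (\sum_(i <- r) F i) = \sum_(i <- r) f (F i).
Proof. exact: (big_morph f linD lin0). Qed.
End Lin.

Section Forms.
Variables (k : comNzRingType) (M : lmodType k) (hs : M -> k).
Hypothesis Hf : forall (a : k) x y, hs (a *: x + y) = a * hs x + hs y.
Lemma kform0 : hs 0 = 0.
Proof.
have E := Hf 1 0 0; rewrite scale1r addr0 mul1r in E.
by apply: (addrI (hs 0)); rewrite addr0 -E.
Qed.
Lemma kformD x y : hs (x + y) = hs x + hs y.
Proof. by have := Hf 1 x y; rewrite scale1r mul1r. Qed.
Lemma kformZ a x : hs (a *: x) = a * hs x.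
Proof. by have := Hf a x 0; rewrite !addr0 kform0 addr0. Qed.
Lemma kform_sum (I : Type) (r : seq I) (F : I -> M) :
  hs (\sum_(i <- r) F i) = \sum_(i <- r) hs (F i).
Proof. exact: (big_morph hs kformD kform0). Qed.
End Forms.

Section Bil.
Variables (k : comNzRingType) (M N P : lmodType k) (b : M -> N -> P).
Hypothesis Hb : bilin b.
Lemma bil1 n : lin (b^~ n).
Proof. by move=> a x y; case: Hb => H1 _; apply: H1. Qed.
Lemma bil2 m : lin (b m).
Proof. by move=> a x y; case: Hb => _ H2; apply: H2. Qed.
End Bil.

Lemma bilinP (k : comNzRingType) (M N P : lmodType k) (b : M -> N -> P) :
  (forall n, lin (b^~ n)) -> (forall m, lin (b m)) -> bilin b.
Proof. by move=> H1 H2; split=> *; [apply: H1|apply: H2]. Qed.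

Lemma trilinP (k : comNzRingType) (M N Q P : lmodType k) (t : M -> N -> Q -> P) :
  (forall n q, lin (fun m => t m n q)) -> (forall m q, lin (fun n => t m n q)) ->
  (forall m n, lin (t m n)) -> trilin t.
Proof. by move=> H1 H2 H3; split; [|split]=> *; [apply: H1|apply: H2|apply: H3]. Qed.

Lemma lin_comp (k : comNzRingType) (M N P : lmodType k) (f : N -> P) (g : M -> N) :
  lin f -> lin g -> lin (f \o g).
Proof. by move=> Hf Hg a x y /=; rewrite Hg Hf. Qed.

Lemma lin_sumF (k : comNzRingType) (M N : lmodType k) (I : Type) (r : seq I)
   (F : I -> M -> N) : (forall i, lin (F i)) -> lin (fun m => \sum_(i <- r) F i m).
Proof.
move=> HF a x y; rewrite scaler_sumr -big_split /=.
by apply: eq_bigr => i _; rewrite HF.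
Qed.

Lemma lin_scal (k : comNzRingType) (M N : lmodType k) (c : k) (f : M -> N) :
  lin f -> lin (fun m => c *: f m).
Proof. by move=> Hf a x y; rewrite Hf scalerDr !scalerA mulrC. Qed.

Section Tensor.
Variables (k : comNzRingType) (H : algType k).
Definition Lin := {hs : H -> k | klinear_form hs}.
Definition slice (V : lmodType k) (s : seq (H * V)) (hs : H -> k) : V :=
  \sum_(p <- s) hs p.1 *: p.2.

Variable V : lmodType k.
Record tensor := Tens { tv : Lin -> V;
  tvalP : exists s, forall hs : Lin, tv hs = slice s (sval hs) }.

Lemma tensorP (t1 t2 : tensor) : (forall hs, tv t1 hs = tv t2 hs) -> t1 = t2.
Proof.
case: t1 t2 => f1 P1 [f2 P2] /= E.
have ? : f1 = f2 := funext E; subst.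
by rewrite (Prop_irrelevance P1 P2).
Qed.

Definition tzero : tensor.
Proof. by exists (fun _ => 0); exists [::] => hs; rewrite /slice big_nil. Defined.

Definition tadd (t1 t2 : tensor) : tensor.
Proof.
exists (fun hs => tv t1 hs + tv t2 hs).
case: (tvalP t1) => s1 H1; case: (tvalP t2) => s2 H2.
by exists (s1 ++ s2) => hs; rewrite /slice big_cat H1 H2.
Defined.

Definition topp (t : tensor) : tensor.
Proof.
exists (fun hs => - tv t hs).
case: (tvalP t) => s H1; exists [seq (p.1, - p.2) | p <- s] => hs.
by rewrite /slice big_map H1 /slice -sumrN; apply: eq_bigr => p _; rewrite scalerN.
Defined.

Definition tscal (a : k) (t : tensor) : tensor.
Proof.
exists (fun hs => a *: tv t hs).
case: (tvalP t) => s H1; exists [seq (p.1, a *: p.2) | p <- s] => hs.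
rewrite /slice big_map H1 /slice scaler_sumr; apply: eq_bigr => p _.
by rewrite !scalerA mulrC.
Defined.

Lemma taddA : associative tadd.
Proof. by move=> *; apply: tensorP => hs /=; rewrite addrA. Qed.
Lemma taddC : commutative tadd.
Proof. by move=> *; apply: tensorP => hs /=; rewrite addrC. Qed.
Lemma tadd0 : left_id tzero tadd.
Proof. by move=> *; apply: tensorP => hs /=; rewrite add0r. Qed.
Lemma taddN : left_inverse tzero topp tadd.
Proof. by move=> *; apply: tensorP => hs /=; rewrite addNr. Qed.

HB.instance Definition _ := gen_eqMixin tensor.
HB.instance Definition _ := gen_choiceMixin tensor.
HB.instance Definition _ := GRing.isZmodule.Build tensor taddA taddC tadd0 taddN.

Lemma tscalA a b v : tscal a (tscal b v) = tscal (a * b) v.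
Proof. by apply: tensorP => hs /=; rewrite scalerA. Qed.
Lemma tscal1 : left_id 1 tscal.
Proof. by move=> v; apply: tensorP => hs /=; rewrite scale1r. Qed.
Lemma tscalDr : right_distributive tscal +%R.
Proof. by move=> a u v; apply: tensorP => hs /=; rewrite scalerDr. Qed.
Lemma tscalDl v : {morph tscal^~ v : a b / a + b}.
Proof. by move=> a b; apply: tensorP => hs /=; rewrite scalerDl. Qed.

HB.instance Definition _ := GRing.Zmodule_isLmodule.Build k tensor tscalA tscal1 tscalDr tscalDl.

Lemma tvalD (t1 t2 : tensor) hs : tv (t1 + t2) hs = tv t1 hs + tv t2 hs.
Proof. by []. Qed.
Lemma tvalZ a (t : tensor) hs : tv (a *: t) hs = a *: tv t hs.
Proof. by []. Qed.
Lemma tval0 hs : tv (0 : tensor) hs = 0.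
Proof. by []. Qed.
Lemma tval_lin hs : lin (fun t : tensor => tv t hs).
Proof. by []. Qed.
Lemma tval_sum (I : Type) (r : seq I) (F : I -> tensor) hs :
  tv (\sum_(i <- r) F i) hs = \sum_(i <- r) tv (F i) hs.
Proof. exact: (lin_sum (tval_lin hs)). Qed.

Definition rep (t : tensor) : seq (H * V) := proj1_sig (cid (tvalP t)).
Lemma repP t hs : tv t hs = slice (rep t) (sval hs).
Proof. by rewrite /rep; case: (cid _) => s /=. Qed.

Lemma tval_ext (t : tensor) (h1 h2 : Lin) : sval h1 =1 sval h2 -> tv t h1 = tv t h2.
Proof. by move=> E; rewrite !repP /slice; apply: eq_bigr => p _; rewrite E. Qed.

Definition tens (x : H) (v : V) : tensor.
Proof.
exists (fun hs => sval hs x *: v); exists [:: (x, v)] => hs.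
by rewrite /slice big_seq1.
Defined.

Lemma tvalT x v hs : tv (tens x v) hs = sval hs x *: v.
Proof. by []. Qed.

Lemma tens_lin1 v : lin (tens^~ v).
Proof.
move=> a x y; apply: tensorP => -[hs Hhs] /=.
by rewrite Hhs scalerDl scalerA.
Qed.
Lemma tens_lin2 x : lin (tens x).
Proof.
move=> a u w; apply: tensorP => -[hs Hhs] /=.
by rewrite scalerDr !scalerA mulrC.
Qed.

Lemma tens_rep (t : tensor) : t = \sum_(p <- rep t) tens p.1 p.2.
Proof. by apply: tensorP => hs; rewrite tval_sum repP. Qed.

End Tensor.

Arguments Tens {k H V}.

Module InjM.
Import finmap monalg.


Section Inj.
Variables (k : comNzRingType) (H : algType k).
Hypothesis proj : projective_module H.

Definition gmap (c : {malg k[H]}) : H := mmap (in_alg H) id c.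

Lemma gmap_lin : lin gmap.
Proof.
move=> a x y; rewrite /gmap mmapD; congr (_ + _).
rewrite (@mmapEw _ _ _ _ _ (msupp x)) ?msuppZ_le // mmapE scaler_sumr.
by apply: eq_bigr => z _; rewrite mcoeffZ /= !mulr_algl scalerA.
Qed.

Lemma gmap_surj v : exists m, gmap m = v.
Proof. by exists << 1 *g v >>; rewrite /gmap mmapU /= mulr_algl scale1r. Qed.

Lemma dual_basis : exists f : H -> {malg k[H]}, lin f /\ forall v, gmap (f v) = v.
Proof.
have [f [Hf1 Hf2]] := proj gmap_lin gmap_surj (f := id) (fun _ _ _ => erefl).
by exists f.
Qed.

Lemma inj (V : lmodType k) (s s' : seq (H * V)) :
  (forall hs : Lin H, slice s (sval hs) = slice s' (sval hs)) -> teq s s'.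
Proof.
move=> E P b Hb.
have [f [Hf Hfg]] := dual_basis.
pose d := foldr (fun p acc => (msupp (f p.1) `|` acc)%fset) fset0 (s ++ s').
have dP : forall p, p \in s ++ s' -> (msupp (f p.1) `<=` d)%fset.
  rewrite /d; elim: (s ++ s') => [//|q l IH] p; rewrite inE => /orP [/eqP ->|/IH Hp] /=.
    exact: fsubsetUl.
  exact: fsubset_trans Hp (fsubsetUr _ _).
have cl : forall y, klinear_form (fun x : H => (f x)@_y).
  by move=> y a x z; rewrite Hf mcoeffD mcoeffZ.
have exp : forall (x : H) (v : V), (msupp (f x) `<=` d)%fset ->
    b x v = \sum_(y <- d) b y ((f x)@_y *: v).
  move=> x v Hx; rewrite -{1}(Hfg x) /gmap (mmapEw Hx) (lin_sum (bil1 Hb v)).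
  by apply: eq_bigr => y _; rewrite /= mulr_algl (linZ (bil1 Hb v)) (linZ (bil2 Hb y)).
have key : forall l, (forall p, p \in l -> (msupp (f p.1) `<=` d)%fset) ->
   \sum_(p <- l) b p.1 p.2 = \sum_(y <- d) b y (slice l (fun x => (f x)@_y)).
  move=> l Hl; rewrite (eq_big_seq _ (fun p Hp => exp p.1 p.2 (Hl p Hp))).
  rewrite exchange_big /=; apply: eq_bigr => y _.
  by rewrite /slice (lin_sum (bil2 Hb y)).
rewrite key; last by move=> p Hp; apply: dP; rewrite mem_cat Hp.
rewrite key; last by move=> p Hp; apply: dP; rewrite mem_cat Hp orbT.
apply: eq_bigr => y _; congr (b y _).
exact: (E (exist _ _ (cl y))).
Qed.

End Inj.

End InjM.
Import InjM.

Section Hopf.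
Variables (k : comNzRingType) (H : algType k) (D : H -> seq (H * H))
  (eps : H -> k) (S : H -> H).
Hypothesis hopf : is_hopf D eps S.

Lemma teq_sum (M N : lmodType k) (s s' : seq (M * N)) (P : lmodType k) (b : M -> N -> P) :
  teq s s' -> bilin b -> \sum_(p <- s) b p.1 p.2 = \sum_(p <- s') b p.1 p.2.
Proof. by move=> E Hb; apply: E. Qed.

Lemma tscale_sum (M N P : lmodType k) (b : M -> N -> P) a s : bilin b ->
  \sum_(p <- tscale a s) b p.1 p.2 = a *: \sum_(p <- s) b p.1 p.2.
Proof.
move=> Hb; rewrite /tscale big_map scaler_sumr; apply: eq_bigr => p _.
by rewrite /= (linZ (bil1 Hb _)).
Qed.

Lemma Dlin (P : lmodType k) (b : H -> H -> P) : bilin b ->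
  lin (fun x => \sum_(q <- D x) b q.1 q.2).
Proof.
move=> Hb a x y; case: hopf => HD _.
by rewrite (teq_sum (HD a x y) Hb) big_cat tscale_sum.
Qed.

Lemma coassoc (P : lmodType k) (t : H -> H -> H -> P) h : trilin t ->
  \sum_(p <- D h) \sum_(q <- D p.1) t q.1 q.2 p.2 =
  \sum_(p <- D h) \sum_(q <- D p.2) t p.1 q.1 q.2.
Proof. by case: hopf => _ [Hc _] Ht; apply: Hc. Qed.

Lemma eps_lin : klinear_form eps.
Proof. by case: hopf => _ [_ [He _]]. Qed.

Lemma counit1 h : \sum_(p <- D h) eps p.1 *: p.2 = h.
Proof. by case: hopf => _ [_ [_ [Hc _]]]. Qed.
Lemma counit2 h : \sum_(p <- D h) eps p.2 *: p.1 = h.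
Proof. by case: hopf => _ [_ [_ [_ [Hc _]]]]. Qed.
Lemma D1 : teq (D 1) [:: (1, 1)].
Proof. by case: hopf => _ [_ [_ [_ [_ [_ [Hc _]]]]]]. Qed.
Lemma eps1 : eps 1 = 1.
Proof. by case: hopf => _ [_ [_ [_ [_ [_ [_ [_ [Hc _]]]]]]]]. Qed.

Section Dimod.
Variable M : dimod D eps.
Local Notation act := (@dm_act _ _ _ _ M).
Local Notation rho := (@dm_rho _ _ _ _ M).

Lemma act_lin1 h : lin (fun m => act m h).
Proof. by case: (dm_ax M) => H1 _ a x y; apply: H1. Qed.
Lemma act_lin2 m : lin (act m).
Proof. by case: (dm_ax M) => _ [H1 _] a x y; apply: H1. Qed.
Lemma act1 m : act m 1 = m.
Proof. by case: (dm_ax M) => _ [_ [H1 _]]. Qed.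
Lemma actA m x y : act (act m x) y = act m (x * y).
Proof. by case: (dm_ax M) => _ [_ [_ [H1 _]]]. Qed.
Lemma rho_lin (P : lmodType k) (b : H -> dm_sort M -> P) : bilin b ->
  lin (fun m => \sum_(p <- rho m) b p.1 p.2).
Proof.
move=> Hb a x y; case: (dm_ax M) => _ [_ [_ [_ [HD _]]]].
by rewrite (teq_sum (HD a x y) Hb) big_cat tscale_sum.
Qed.
Lemma coassocM (P : lmodType k) (t : H -> H -> dm_sort M -> P) m : trilin t ->
  \sum_(p <- rho m) \sum_(q <- D p.1) t q.1 q.2 p.2 =
  \sum_(p <- rho m) \sum_(q <- rho p.2) t p.1 q.1 q.2.
Proof. by case: (dm_ax M) => _ [_ [_ [_ [_ [Hc _]]]]] Ht; apply: Hc. Qed.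
Lemma counitM m : \sum_(p <- rho m) eps p.1 *: p.2 = m.
Proof. by case: (dm_ax M) => _ [_ [_ [_ [_ [_ [Hc _]]]]]]. Qed.
Lemma longM (P : lmodType k) (b : H -> dm_sort M -> P) m h : bilin b ->
  \sum_(p <- rho (act m h)) b p.1 p.2 = \sum_(p <- rho m) b p.1 (act p.2 h).
Proof.
case: (dm_ax M) => _ [_ [_ [_ [_ [_ [_ Hc]]]]]] Hb.
by rewrite (teq_sum (Hc m h) Hb) big_map.
Qed.
End Dimod.

Lemma dimor_lin (M N : dimod D eps) (f : dm_sort M -> dm_sort N) : dimor f -> lin f.
Proof. by case=> [[]]. Qed.
Lemma hlin_lin (M N : dimod D eps) (f : dm_sort M -> dm_sort N) : hlin f -> lin f.
Proof. by case. Qed.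
Lemma hlin_act (M N : dimod D eps) (f : dm_sort M -> dm_sort N) : hlin f ->
  forall m h, f (dm_act m h) = dm_act (f m) h.
Proof. by case. Qed.
Lemma dimor_rho (M N : dimod D eps) (f : dm_sort M -> dm_sort N) : dimor f ->
  forall (P : lmodType k) (b : H -> dm_sort N -> P) m, bilin b ->
  \sum_(p <- dm_rho (f m)) b p.1 p.2 = \sum_(p <- dm_rho m) b p.1 (f p.2).
Proof. by case=> _ Hc P b m Hb; rewrite (teq_sum (Hc m) Hb) big_map. Qed.

End Hopf.

Section TwoOne.
Variables (k : comNzRingType) (H : algType k) (D : H -> seq (H * H))
  (eps : H -> k) (S : H -> H).
Hypothesis hopf : is_hopf D eps S.
Hypothesis proj : projective_module H.
Variable gamma : H -> H -> H.
Hypothesis Hg : gamma_condition D eps gamma.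

Lemma g_lin1 l : lin (fun x => gamma x l).
Proof. by case: Hg => H1 _ a x y; apply: H1. Qed.
Lemma g_lin2 x : lin (gamma x).
Proof. by case: Hg => _ [H1 _] a u y; apply: H1. Qed.
Lemma g_harp h hs : klinear_form hs -> forall l,
  gamma (rharp D h hs) l = gamma h (lharp D hs l).
Proof. by case: Hg => _ [_ [H1 _]]; apply: H1. Qed.
Lemma g_center h l x : gamma h l * x = x * gamma h l.
Proof. by case: Hg => _ [_ [_ [H1 _]]]. Qed.
Lemma g_counit h : \sum_(p <- D h) gamma p.1 p.2 = eps h *: 1.
Proof. by case: Hg => _ [_ [_ [_ H1]]]. Qed.

Definition bb (M N : dimod D eps) (f : dm_sort M -> dm_sort N) (x : H) (n : dm_sort M) :=
  \sum_(q <- dm_rho (f n)) dm_act q.2 (gamma x q.1).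

Definition PP (M N : dimod D eps) (f : dm_sort M -> dm_sort N) (m : dm_sort M) :=
  \sum_(p <- dm_rho m) bb f p.1 p.2.

Lemma Bx_bilin (N : dimod D eps) x : bilin (fun (y : H) (n : dm_sort N) => dm_act n (gamma x y)).
Proof.
apply: bilinP => [n|y].
  exact: lin_comp (act_lin2 n) (g_lin2 x).
exact: act_lin1.
Qed.

Arguments Bx_bilin {N} x.

Lemma bb_bilin (M N : dimod D eps) (f : dm_sort M -> dm_sort N) : lin f -> bilin (bb f).
Proof.
move=> Hf; apply: bilinP => [n|x].
  apply: lin_sumF => q; exact: (lin_comp (act_lin2 q.2) (g_lin1 q.1)).
rewrite /bb; exact: (lin_comp (rho_lin (@Bx_bilin N x)) Hf).
Qed.

Lemma PP_lin (M N : dimod D eps) (f : dm_sort M -> dm_sort N) : lin f -> lin (PP f).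
Proof. by move=> Hf; apply: rho_lin; apply: bb_bilin. Qed.

Lemma PP_hlin (M N : dimod D eps) (f : dm_sort M -> dm_sort N) : hlin f -> hlin (PP f).
Proof.
move=> Hf; have Hl := hlin_lin Hf; split; first exact: PP_lin.
move=> m h; rewrite /PP (longM _ _ (bb_bilin Hl)) (lin_sum (act_lin1 h)).
apply: eq_bigr => p _; rewrite /bb (hlin_act Hf) (longM _ _ (Bx_bilin _)).
rewrite (lin_sum (act_lin1 h)); apply: eq_bigr => q _.
by rewrite !actA g_center.
Qed.

Lemma slice_swap (x y : H) : teq [seq (r.2, gamma x r.1) | r <- D y]
                                 [seq (r.1, gamma r.2 y) | r <- D x].
Proof.
apply: inj => // -[hs Hhs] /=; rewrite /slice !big_map /=.
have -> : \sum_(i <- D y) hs i.2 *: gamma x i.1 = gamma x (lharp D hs y).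
  by rewrite /lharp (lin_sum (g_lin2 x)); apply: eq_bigr => r _; rewrite (linZ (g_lin2 x)).
have -> : \sum_(i <- D x) hs i.1 *: gamma i.2 y = gamma (rharp D x hs) y.
  by rewrite /rharp (lin_sum (g_lin1 y)); apply: eq_bigr => r _; rewrite (linZ (g_lin1 y)).
by rewrite g_harp.
Qed.

Lemma PP_colin (M N : dimod D eps) (f : dm_sort M -> dm_sort N) (m : dm_sort M) :
  hlin f -> teq (dm_rho (PP f m)) [seq (p.1, PP f p.2) | p <- dm_rho m].
Proof.
move=> Hf P b Hb; have Hl := hlin_lin Hf.
rewrite big_map /PP (lin_sum (rho_lin Hb)).
have tri1 : forall x, trilin (fun (a c : H) (n : dm_sort N) => b c (dm_act n (gamma x a))).
  move=> x; apply: trilinP => [c n|a n|a c].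
  - exact: lin_comp (bil2 Hb c) (lin_comp (act_lin2 n) (g_lin2 x)).
  - exact: (bil1 Hb (dm_act n (gamma x a))).
  - exact: lin_comp (bil2 Hb c) (act_lin1 _).
have tri2 : trilin (fun (a c : H) (m' : dm_sort M) => b a (bb f c m')).
  apply: trilinP => [c n|a n|a c].
  - exact: (bil1 Hb (bb f c n)).
  - exact: lin_comp (bil2 Hb a) (bil1 (bb_bilin Hl) n).
  - exact: lin_comp (bil2 Hb a) (bil2 (bb_bilin Hl) c).
have -> : \sum_(p <- dm_rho m) b p.1 (\sum_(p0 <- dm_rho p.2) bb f p0.1 p0.2) =
          \sum_(p <- dm_rho m) \sum_(q <- D p.1) b q.1 (bb f q.2 p.2).
  have E := coassocM m tri2; simpl in E; rewrite E; apply: eq_bigr => p _.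
  by rewrite (lin_sum (bil2 Hb _)).
apply: eq_bigr => p _; rewrite /bb (lin_sum (rho_lin Hb)).
have -> : \sum_(i <- dm_rho (f p.2))
    \sum_(p0 <- dm_rho (dm_act i.2 (gamma p.1 i.1))) b p0.1 p0.2 =
  \sum_(i <- dm_rho (f p.2)) \sum_(r <- dm_rho i.2) b r.1 (dm_act r.2 (gamma p.1 i.1)).
  apply: eq_bigr => q _; rewrite (longM _ _ Hb) //.
have E := coassocM (f p.2) (tri1 p.1); simpl in E; rewrite -E.
under [RHS]eq_bigr do rewrite (lin_sum (bil2 Hb _)).
rewrite [RHS]exchange_big /=; apply: eq_bigr => q _.
pose B := fun (u : H) (v : H) => b u (dm_act q.2 v).
have HB : bilin B.
  apply: bilinP => [v|u]; first exact: (bil1 Hb (dm_act q.2 v)).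
  exact: lin_comp (bil2 Hb u) (act_lin2 _).
have := slice_swap p.1 q.1 HB; rewrite !big_map /B /= => ->.
by [].
Qed.

Lemma PP_dimor_id (M N : dimod D eps) (f : dm_sort M -> dm_sort N) :
  dimor f -> PP f =1 f.
Proof.
move=> Hf m; have Hl := dimor_lin Hf.
rewrite /PP /bb.
have tri : trilin (fun (a c : H) (m' : dm_sort M) => dm_act (f m') (gamma a c)).
  apply: trilinP => [c n|a n|a c].
  - exact: lin_comp (act_lin2 _) (g_lin1 _).
  - exact: lin_comp (act_lin2 _) (g_lin2 _).
  - exact: lin_comp (act_lin1 _) Hl.
have -> : \sum_(p <- dm_rho m) \sum_(q <- dm_rho (f p.2)) dm_act q.2 (gamma p.1 q.1) =
          \sum_(p <- dm_rho m) \sum_(q <- dm_rho p.2) dm_act (f q.2) (gamma p.1 q.1).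
  apply: eq_bigr => p _; apply: (dimor_rho Hf _ (Bx_bilin _)).
have E := coassocM m tri; simpl in E; rewrite -E.
rewrite -{2}(counitM m) (lin_sum Hl); apply: eq_bigr => p _.
rewrite -(lin_sum (act_lin2 _)) g_counit (linZ (act_lin2 _)) act1.
by rewrite (linZ Hl).
Qed.

Lemma PP_nat (M M' N N' : dimod D eps) (g : dm_sort M' -> dm_sort M)
   (h : dm_sort N -> dm_sort N') (f : dm_sort M -> dm_sort N) :
   dimor g -> dimor h -> hlin f -> PP (h \o f \o g) =1 h \o PP f \o g.
Proof.
move=> Hgd Hh Hf m /=; have Hfl := hlin_lin Hf.
have Hhl := dimor_lin Hh.
rewrite /PP.
have -> : \sum_(p <- dm_rho m) bb (h \o f \o g) p.1 p.2 =
          \sum_(p <- dm_rho m) h (bb f p.1 (g p.2)).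
  apply: eq_bigr => p _; rewrite /bb /= (dimor_rho Hh _ (Bx_bilin _)) (lin_sum Hhl).
  by apply: eq_bigr => q _; rewrite (hlin_act Hh.1).
rewrite (dimor_rho Hgd _ (bb_bilin Hfl)) (lin_sum Hhl).
by [].
Qed.

Lemma two_one : forgetful_separable D eps.
Proof.
exists (fun M N f => @PP M N f); split; [|split].
- move=> M N f Hf; split; first exact: PP_hlin.
  by move=> m; apply: PP_colin.
- by move=> M N f Hf; apply: PP_dimor_id.
- by move=> M M' N N' g h f Hgd Hh Hf; apply: PP_nat.
Qed.

End TwoOne.

Section TCons.
Variables (k : comNzRingType) (H : algType k) (D : H -> seq (H * H))
  (eps : H -> k) (S : H -> H).
Hypothesis hopf : is_hopf D eps S.
Hypothesis proj : projective_module H.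

Lemma form_lin (V : lmodType k) (hs : H -> k) (v : V) : klinear_form hs ->
  lin (fun x => hs x *: v).
Proof. by move=> Hh a x y; rewrite Hh scalerDl scalerA. Qed.

Lemma slice_bilin (V : lmodType k) (hs : H -> k) : klinear_form hs ->
  bilin (fun (x : H) (v : V) => hs x *: v).
Proof.
move=> Hh; apply: bilinP => [v|x]; first exact: form_lin.
exact: lin_scal (fun v => v) _.
Qed.

Lemma dimor_id (M : dimod D eps) : dimor (@id (dm_sort M)).
Proof.
split; first by split.
by move=> m P b Hb; rewrite big_map; under [RHS]eq_bigr do rewrite /=; case: (dm_rho m).
Qed.

Definition epsL : Lin H := exist _ eps (eps_lin hopf).

Section T.
Variable M : dimod D eps.
Local Notation V := (dm_sort M).
Local Notation act := (@dm_act _ _ _ _ M).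

Definition actT (t : tensor H V) (h : H) : tensor H V.
Proof.
exists (fun hs => act (tv t hs) h).
case: (tvalP t) => s Hs; exists [seq (p.1, act p.2 h) | p <- s] => hs.
rewrite Hs /slice big_map (lin_sum (act_lin1 h)); apply: eq_bigr => p _.
by rewrite (linZ (act_lin1 h)).
Defined.

Lemma tvalA t h hs : tv (actT t h) hs = act (tv t hs) h.
Proof. by []. Qed.

Definition rhoT (t : tensor H V) : seq (H * tensor H V) :=
  [seq (q.1, tens q.2 p.2) | p <- rep t, q <- D p.1].

Definition Bt (P : lmodType k) (b : H -> tensor H V -> P) (u : H) (v : V) :=
  \sum_(q <- D u) b q.1 (tens q.2 v).

Lemma Bt_bilin (P : lmodType k) (b : H -> tensor H V -> P) : bilin b -> bilin (Bt b).
Proof.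
move=> Hb; apply: bilinP => [v|u].
  rewrite /Bt; apply: (Dlin hopf (b := fun x y => b x (tens y v))).
  apply: bilinP => [y|x]; first exact: (bil1 Hb (tens y v)).
  exact: lin_comp (bil2 Hb x) (tens_lin1 v).
apply: lin_sumF => q; exact: lin_comp (bil2 Hb q.1) (tens_lin2 q.2).
Qed.

Lemma rhoT_sum (P : lmodType k) (b : H -> tensor H V -> P) (t : tensor H V)
  (s : seq (H * V)) : bilin b -> (forall hs : Lin H, tv t hs = slice s (sval hs)) ->
  \sum_(p <- rhoT t) b p.1 p.2 = \sum_(p <- s) Bt b p.1 p.2.
Proof.
move=> Hb Hs; rewrite /rhoT big_allpairs_dep /=.
apply: (inj proj) (Bt_bilin Hb) => hs.
by rewrite -Hs -repP.
Qed.

Lemma actT_lin1 h : lin (actT^~ h).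
Proof. by move=> a x y; apply: tensorP => hs /=; rewrite (act_lin1 h). Qed.

Lemma rhoT_lin (P : lmodType k) (b : H -> tensor H V -> P) : bilin b ->
  lin (fun t => \sum_(p <- rhoT t) b p.1 p.2).
Proof.
move=> Hb a x y.
rewrite (@rhoT_sum _ _ _ ([seq (p.1, a *: p.2) | p <- rep x] ++ rep y) Hb).
  rewrite big_cat big_map (rhoT_sum Hb (repP x)) (rhoT_sum Hb (repP y)).
  congr (_ + _); rewrite scaler_sumr; apply: eq_bigr => p _ /=.
  by rewrite (linZ (bil2 (Bt_bilin Hb) _)).
move=> hs; rewrite tvalD tvalZ /slice big_cat big_map /= !repP /slice scaler_sumr.
by congr (_ + _); apply: eq_bigr => p _; rewrite !scalerA mulrC.
Qed.

Lemma actT_tens y v h : actT (tens y v) h = tens y (act v h).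
Proof. by apply: tensorP => hs; rewrite tvalA !tvalT (linZ (act_lin1 h)). Qed.

Lemma TM_ax : dimod_axioms D eps actT rhoT.
Proof.
split; first by move=> a m m' h; apply: actT_lin1.
split; first by move=> a m x y; apply: tensorP => hs /=; rewrite (act_lin2 _).
split; first by move=> m; apply: tensorP => hs /=; rewrite act1.
split; first by move=> m x y; apply: tensorP => hs /=; rewrite actA.
split.
  move=> a m m' P b Hb; rewrite (rhoT_lin Hb) big_cat.
  by rewrite (tscale_sum _ _ Hb).
split.
  move=> t P tr Htr.
  have Hb1 : bilin (fun x t' => \sum_(q <- D x) tr q.1 q.2 t').
    apply: bilinP => [t'|x].
      apply: (Dlin hopf (b := fun u w => tr u w t')); apply: bilinP => [w|u].
        by case: Htr => H1 _ a y z; apply: H1.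
      by case: Htr => _ [H1 _] a y z; apply: H1.
    apply: lin_sumF => q; by case: Htr => _ [_ H1] a y z; apply: H1.
  have Hb2 : bilin (fun x t' => \sum_(q <- rhoT t') tr x q.1 q.2).
    apply: bilinP => [t'|x].
      apply: lin_sumF => q; by case: Htr => H1 _ a y z; apply: H1.
    apply: (rhoT_lin (b := tr x)); apply: bilinP => [w|u].
      by case: Htr => _ [H1 _] a y z; apply: H1.
    by case: Htr => _ [_ H1] a y z; apply: H1.
  have := rhoT_sum Hb1 (repP t); rewrite /= => ->.
  have := rhoT_sum Hb2 (repP t); rewrite /= => ->.
  apply: eq_bigr => p _; rewrite /Bt.
  have -> : \sum_(q <- D p.1) \sum_(q0 <- rhoT (tens q.2 p.2)) tr q.1 q0.1 q0.2 =
            \sum_(q <- D p.1) \sum_(r <- D q.2) tr q.1 r.1 (tens r.2 p.2).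
    apply: eq_bigr => q _.
    have Hb3 : bilin (tr q.1).
      apply: bilinP => [w|u].
        by case: Htr => _ [H1 _] a y z; apply: H1.
      by case: Htr => _ [_ H1] a y z; apply: H1.
    rewrite (@rhoT_sum _ _ _ [:: (q.2, p.2)] Hb3) ?big_seq1 //.
    by move=> hs; rewrite tvalT /slice big_seq1.
  have Ht3 : trilin (fun u w z => tr u w (tens z p.2)).
    case: Htr => H1 [H2 H3]; apply: trilinP => [w z|u z|u w] a x y.
    - exact: H1.
    - exact: H2.
    - by rewrite (tens_lin1 p.2) H3.
  have := coassoc hopf p.1 Ht3; rewrite /= => <-.
  by [].
split.
  move=> t; apply: tensorP => hs; rewrite tval_sum.
  have Hb : bilin (fun x (t' : tensor H V) => eps x *: tv t' hs).
    apply: bilinP => [t'|x]; first exact: (form_lin _ (eps_lin hopf)).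
    exact: (lin_scal (eps x) (tval_lin hs)).
  have := rhoT_sum Hb (repP t); rewrite /= => ->.
  rewrite repP /slice; apply: eq_bigr => p _; rewrite /Bt.
  case: hs Hb => hs Hhs _ /=.
  under eq_bigr do rewrite scalerA.
  rewrite -scaler_suml; congr (_ *: _).
  rewrite -{2}(counit1 hopf p.1) (kform_sum Hhs); apply: eq_bigr => q _.
  by rewrite (kformZ Hhs).
move=> m h P b Hb.
have Hb' : bilin (fun x t' => b x (actT t' h)).
  apply: bilinP => [t'|x]; first exact: (bil1 Hb (actT t' h)).
  exact: lin_comp (bil2 Hb x) (actT_lin1 h).
rewrite big_map (rhoT_sum Hb' (repP m)).
rewrite (@rhoT_sum _ _ _ [seq (p.1, act p.2 h) | p <- rep m] Hb).
  rewrite big_map; apply: eq_bigr => p _; rewrite /Bt; apply: eq_bigr => q _.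
  by rewrite actT_tens.
move=> hs; rewrite tvalA repP /slice big_map (lin_sum (act_lin1 h)).
by apply: eq_bigr => p _; rewrite (linZ (act_lin1 h)).
Qed.

Definition TM : dimod D eps := @Dimod _ _ D eps (tensor H V : lmodType k) actT rhoT TM_ax.

Definition etaT (m : V) : tensor H V.
Proof. by exists (fun hs => slice (dm_rho m) (sval hs)); exists (dm_rho m). Defined.

Lemma eta_tens m : etaT m = \sum_(p <- dm_rho m) tens p.1 p.2.
Proof. by apply: tensorP => hs; rewrite tval_sum. Qed.

Lemma eta_dimor : @dimor _ _ D eps M TM etaT.
Proof.
split; first split.
- move=> a x y; apply: tensorP => -[hs Hhs] /=.
  by rewrite /slice (rho_lin (slice_bilin _ Hhs)).
- move=> m h; apply: tensorP => -[hs Hhs]; rewrite /= /slice.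
  rewrite (longM _ _ (slice_bilin _ Hhs)) (lin_sum (act_lin1 h)).
  by apply: eq_bigr => p _; rewrite (linZ (act_lin1 h)).
move=> m P b Hb; rewrite big_map.
rewrite /dm_rho /= (rhoT_sum Hb (s := dm_rho m)) //.
rewrite /Bt.
have Ht : trilin (fun (u w : H) (z : V) => b u (tens w z)).
  apply: trilinP => [w z|u z|u w].
  - exact: (bil1 Hb (tens w z)).
  - exact: lin_comp (bil2 Hb u) (tens_lin1 z).
  - exact: lin_comp (bil2 Hb u) (tens_lin2 w).
have := coassocM m Ht; rewrite /= => ->.
apply: eq_bigr => p _; rewrite eta_tens (lin_sum (bil2 Hb _)).
by [].
Qed.

Definition epsT (t : tensor H V) : V := tv t epsL.

Lemma epsT_hlin : @hlin _ _ D eps TM M epsT.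
Proof. by split. Qed.

Lemma epsT_eta m : epsT (etaT m) = m.
Proof. by rewrite /epsT /= -{2}(counitM m). Qed.

End T.

Section Tmap.
Variables (M N : dimod D eps) (g : dm_sort M -> dm_sort N).
Hypothesis Hg : lin g.

Definition Tmap (t : tensor H (dm_sort M)) : tensor H (dm_sort N).
Proof.
exists (fun hs => g (tv t hs)).
case: (tvalP t) => s Hs; exists [seq (p.1, g p.2) | p <- s] => hs.
by rewrite Hs /slice big_map (lin_sum Hg); apply: eq_bigr => p _; rewrite (linZ Hg).
Defined.

Lemma Tmap_tens y v : Tmap (tens y v) = tens y (g v).
Proof. by apply: tensorP => hs /=; rewrite (linZ Hg). Qed.

Lemma Tmap_lin : lin Tmap.
Proof. by move=> a x y; apply: tensorP => hs /=; rewrite Hg. Qed.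

Lemma Tmap_dimor : hlin g -> @dimor _ _ D eps (TM M) (TM N) Tmap.
Proof.
move=> Hh; split; first split.
- exact: Tmap_lin.
- by move=> m h; apply: tensorP => hs /=; rewrite (hlin_act Hh).
move=> t P b Hb; rewrite big_map.
have Hb' : bilin (fun x t' => b x (Tmap t')).
  apply: bilinP => [t'|x]; first exact: (bil1 Hb (Tmap t')).
  exact: lin_comp (bil2 Hb x) Tmap_lin.
rewrite /dm_rho /= (rhoT_sum Hb' (repP t)).
rewrite (@rhoT_sum _ _ _ _ [seq (p.1, g p.2) | p <- rep t] Hb).
  rewrite big_map; apply: eq_bigr => p _; rewrite /Bt; apply: eq_bigr => q _.
  by rewrite Tmap_tens.
move=> hs; rewrite /= repP /slice big_map (lin_sum Hg).
by apply: eq_bigr => p _; rewrite (linZ Hg).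
Qed.

End Tmap.

End TCons.

Section OneTwo.
Variables (k : comNzRingType) (H : algType k) (D : H -> seq (H * H))
  (eps : H -> k) (S : H -> H).
Hypothesis hopf : is_hopf D eps S.
Hypothesis proj : projective_module H.
Variable Pm : forall M N : dimod D eps,
               (dm_sort M -> dm_sort N) -> (dm_sort M -> dm_sort N).
Hypothesis HP1 : forall M N f, @hlin _ _ D eps M N f -> dimor (Pm f).
Hypothesis HP2 : forall M N f, @dimor _ _ D eps M N f -> Pm f =1 f.
Hypothesis HP3 : forall (M M' N N' : dimod D eps) (g : dm_sort M' -> dm_sort M)
            (h : dm_sort N -> dm_sort N') (f : dm_sort M -> dm_sort N),
       dimor g -> dimor h -> hlin f ->
       Pm (h \o f \o g) =1 h \o Pm f \o g.

Local Notation TMM := (TM hopf proj).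

Definition nu (M : dimod D eps) : dm_sort (TMM M) -> dm_sort M :=
  Pm (M:=TMM M) (N:=M) (@epsT _ _ _ _ _ hopf M).
Arguments nu : clear implicits.

Lemma nu_dimor M : @dimor _ _ D eps (TMM M) M (nu M).
Proof. exact: HP1 (epsT_hlin hopf proj M). Qed.

Lemma nu_eta M (m : dm_sort M) : nu M (etaT m) = m.
Proof.
have E := @HP3 (TMM M) M M M (@etaT _ _ _ _ M) id (@epsT _ _ _ _ _ hopf M)
   (eta_dimor hopf proj M) (dimor_id M) (epsT_hlin hopf proj M) m.
have Ef : (id \o @epsT _ _ _ _ _ hopf M \o @etaT _ _ _ _ M) = id.
  by apply: funext => x; apply: epsT_eta.
rewrite Ef in E; rewrite /= in E; rewrite /nu -E.
exact: HP2 (dimor_id M) m.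
Qed.

Lemma nu_nat (M N : dimod D eps) (g : dm_sort M -> dm_sort N) (Hd : dimor g)
  (t : dm_sort (TMM M)) :
  nu N (Tmap (dimor_lin Hd) t) = g (nu M t).
Proof.
have E1 := @HP3 (TMM N) (TMM M) N N (Tmap (dimor_lin Hd)) id (@epsT _ _ _ _ _ hopf N)
   (Tmap_dimor hopf proj (dimor_lin Hd) Hd.1) (dimor_id N) (epsT_hlin hopf proj N) t.
have E2 := @HP3 (TMM M) (TMM M) M N id g (@epsT _ _ _ _ _ hopf M)
   (dimor_id (TMM M)) Hd (epsT_hlin hopf proj M) t.
have Ef : (id \o @epsT _ _ _ _ _ hopf N \o Tmap (dimor_lin Hd)) =
          (g \o @epsT _ _ _ _ _ hopf M \o id) by [].
rewrite Ef in E1; rewrite /= in E1 E2.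
by rewrite /nu -E1 E2.
Qed.

Definition Bact (m h : H) : H := m * h.
Definition Brho (m : H) : seq (H * H) := [:: (1, m)].

Lemma B_ax : @dimod_axioms _ _ D eps (H : lmodType k) Bact Brho.
Proof.
rewrite /Bact /Brho.
split; first by move=> a m m' h; rewrite mulrDl scalerAl.
split; first by move=> a m x y; rewrite mulrDr scalerAr.
split; first by move=> m; rewrite mulr1.
split; first by move=> m x y; rewrite mulrA.
split.
  move=> a m m' P b Hb; rewrite /tscale /= !big_cons !big_nil !addr0 /=.
  by rewrite (bil2 Hb) (linZ (bil1 Hb m)).
split.
  move=> m P t Ht; rewrite !big_seq1 /=.
  have Hb : bilin (fun u w : H => t u w m).
    case: Ht => H1 [H2 _]; apply: bilinP => [w|u] a x y; [exact: H1|exact: H2].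
  by rewrite (D1 hopf Hb) !big_seq1.
split; first by move=> m; rewrite big_seq1 /= (eps1 hopf) scale1r.
by move=> m h P b Hb.
Qed.

Definition B : dimod D eps := @Dimod _ _ D eps (H : lmodType k) Bact Brho B_ax.
Definition C : dimod D eps := TMM B.

Definition gam (x y : H) : H :=
  tv (nu C (tens x (tens y (1 : H)))) (epsL hopf).


Lemma nuC_lin : lin (nu C).
Proof. exact: dimor_lin (nu_dimor C). Qed.

Lemma tvnu_lin (hs : Lin H) : lin (fun t : dm_sort (TMM C) => tv (nu C t) hs).
Proof. exact: lin_comp (tval_lin hs) nuC_lin. Qed.

Lemma gam_lin1 l : lin (fun x => gam x l).
Proof.
move=> a x y; rewrite /gam (tens_lin1 (tens l (1 : H))).
exact: (tvnu_lin (epsL hopf)).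
Qed.

Lemma gam_lin2 x : lin (gam x).
Proof.
move=> a y y'; rewrite /gam (tens_lin1 (1 : H)) (tens_lin2 x).
exact: (tvnu_lin (epsL hopf)).
Qed.

Lemma Lz_dimor (z : H) : @dimor _ _ D eps B B (fun m : H => z * m).
Proof.
split; first split.
- by move=> a x y; rewrite mulrDr scalerAr.
- by move=> m h; rewrite /= /Bact mulrA.
by move=> m P b Hb.
Qed.

Lemma gam_center h l z : gam h l * z = z * gam h l.
Proof.
have Hd := Tmap_dimor hopf proj (dimor_lin (Lz_dimor z)) (Lz_dimor z).1.
have E := nu_nat Hd (tens h (tens l (1 : H))).
have E1 : Tmap (dimor_lin Hd) (tens h (tens l (1 : H))) = tens h (tens l z).
  by rewrite Tmap_tens Tmap_tens mulr1.
have E2 : @dm_act _ _ _ _ (TMM C) (tens h (tens l (1 : H))) z = tens h (tens l z).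
  by rewrite /= actT_tens /= actT_tens /= /Bact mul1r.
have E3 := (nu_dimor C).1.2 (tens h (tens l (1 : H))) z.
rewrite E2 in E3; rewrite E1 in E.
rewrite /gam.
have -> : tv (nu C (tens h (tens l 1))) (epsL hopf) * z =
          tv (@dm_act _ _ _ _ C (nu C (tens h (tens l 1))) z) (epsL hopf) by [].
by rewrite -E3 E.
Qed.

Lemma tens_bilin (V : lmodType k) : bilin (@tens k H V).
Proof. by apply: bilinP => [v|x]; [exact: tens_lin1|exact: tens_lin2]. Qed.

Lemma gam_counit h : \sum_(p <- D h) gam p.1 p.2 = eps h *: 1.
Proof.
have E := nu_eta (M := C) (tens h (1 : H)).
have E1 : @etaT _ _ _ _ C (tens h (1 : H)) = \sum_(q <- D h) tens q.1 (tens q.2 (1 : H)).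
  rewrite eta_tens.
  have := @rhoT_sum _ _ _ _ _ hopf proj B _ _ (tens h (1 : H)) [:: (h, 1)] (tens_bilin _).
  rewrite big_seq1 /Bt => -> //.
  by move=> hs; rewrite /slice big_seq1.
rewrite E1 in E.
have := lin_sum (tvnu_lin (epsL hopf)) (D h) (fun q => tens q.1 (tens q.2 (1 : H))).
rewrite /= E => <-.
by [].
Qed.

Section Harp.
Variables (hs : H -> k) (Hhs : klinear_form hs).
Let hsL : Lin H := exist _ hs Hhs.

Lemma DsumZ (P : lmodType k) (b : H -> H -> P) (a : k) x : bilin b ->
  \sum_(q <- D (a *: x)) b q.1 q.2 = a *: \sum_(q <- D x) b q.1 q.2.
Proof. by move=> Hb; exact: (linZ (Dlin hopf Hb)). Qed.
Lemma DsumS (P : lmodType k) (b : H -> H -> P) (I : Type) (r : seq I) F : bilin b ->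
  \sum_(q <- D (\sum_(i <- r) F i)) b q.1 q.2 = \sum_(i <- r) \sum_(q <- D (F i)) b q.1 q.2.
Proof. by move=> Hb; exact: (lin_sum (Dlin hopf Hb)). Qed.

Lemma lharp_lin : lin (lharp D hs).
Proof.
rewrite /lharp; apply: (Dlin hopf (b := fun x y => hs y *: x)).
apply: bilinP => [y|x]; last exact: form_lin.
exact: (lin_scal (hs y) (f := fun v : H => v)).
Qed.

Definition conv (h' : Lin H) : Lin H.
Proof.
exists (fun u => sval h' (lharp D hs u)).
by move=> a x y; rewrite lharp_lin (svalP h').
Defined.

Definition ghs (c : tensor H H) : tensor H H.
Proof.
exists (fun h' => tv c (conv h')).
exists [seq (lharp D hs p.1, p.2) | p <- rep c] => h'.
by rewrite repP /slice big_map.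
Defined.

Lemma ghs_tens y v : ghs (tens y v) = tens (lharp D hs y) v.
Proof. by apply: tensorP. Qed.

Lemma ghs_lin : lin ghs.
Proof. by move=> a x y; apply: tensorP. Qed.

Lemma swapD (P : lmodType k) (Bq : H -> H -> P) u : bilin Bq ->
  \sum_(q <- D (lharp D hs u)) Bq q.1 q.2 = \sum_(q <- D u) Bq q.1 (lharp D hs q.2).
Proof.
move=> HB; rewrite {1}/lharp (DsumS _ _ HB).
under eq_bigr do rewrite (DsumZ _ _ HB) scaler_sumr.
under [RHS]eq_bigr do rewrite /lharp (lin_sum (bil2 HB _)).
under [RHS]eq_bigr do under eq_bigr do rewrite (linZ (bil2 HB _)).
have Ht : trilin (fun a b' c => hs c *: Bq a b').
  apply: trilinP => [b' c|a c|a b'].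
  - exact: lin_scal (bil1 HB b').
  - exact: lin_scal (bil2 HB a).
  - exact: form_lin.
exact: (coassoc hopf u Ht).
Qed.

Lemma ghs_dimor : @dimor _ _ D eps C C ghs.
Proof.
split; first split.
- exact: ghs_lin.
- by move=> m h; apply: tensorP.
move=> c P b Hb; rewrite big_map.
have Hb' : bilin (fun x t => b x (ghs t)).
  apply: bilinP => [t|x]; first exact: (bil1 Hb (ghs t)).
  exact: lin_comp (bil2 Hb x) ghs_lin.
rewrite /dm_rho /=.
rewrite (@rhoT_sum _ _ _ _ _ hopf proj B _ _ _ [seq (lharp D hs p.1, p.2) | p <- rep c] Hb).
  rewrite (@rhoT_sum _ _ _ _ _ hopf proj B _ _ _ _ Hb' (repP c)) big_map.
  apply: eq_bigr => p _; rewrite /Bt.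
  under [RHS]eq_bigr do rewrite ghs_tens.
  apply: (swapD (Bq := fun x y => b x (tens y p.2))).
  apply: bilinP => [y|x]; first exact: (bil1 Hb (tens y p.2)).
  exact: lin_comp (bil2 Hb x) (tens_lin1 p.2).
by move=> h'; rewrite /= repP /slice big_map.
Qed.

Lemma conv_eps (c : tensor H H) : tv c (conv (epsL hopf)) = tv c hsL.
Proof.
apply: tval_ext => u /=.
rewrite /lharp (kform_sum (eps_lin hopf)).
under eq_bigr do rewrite (kformZ (eps_lin hopf)).
rewrite -{2}(counit1 hopf u) (kform_sum Hhs); apply: eq_bigr => p _.
by rewrite (kformZ Hhs) mulrC.
Qed.

Lemma stepB h l : tv (nu C (tens h (tens l (1 : H)))) hsL = gam h (lharp D hs l).
Proof.
have Hd := ghs_dimor.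
have E := nu_nat Hd (tens h (tens l (1 : H))).
have E1 : Tmap (dimor_lin Hd) (tens h (tens l (1 : H))) = tens h (tens (lharp D hs l) (1 : H)).
  by rewrite Tmap_tens ghs_tens.
rewrite E1 in E; rewrite /gam E -conv_eps.
by [].
Qed.

Lemma stepA h l : gam (rharp D h hs) l = tv (nu C (tens h (tens l (1 : H)))) hsL.
Proof.
set w := tens h (tens l (1 : H)).
have Hb : bilin (fun (x : H) (c : tensor H H) => hs x *: tv c (epsL hopf)).
  apply: bilinP => [c|x]; first exact: form_lin.
  exact: lin_scal (tval_lin _).
have E := dimor_rho (nu_dimor C) w Hb.
have Hb' : bilin (fun (x : H) (t : dm_sort (TMM C)) => hs x *: tv (nu C t) (epsL hopf)).
  apply: bilinP => [t|x]; first exact: form_lin.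
  exact: lin_scal (tvnu_lin _).
have E2 := @rhoT_sum _ _ _ _ _ hopf proj C _ _ w [:: (h, tens l (1 : H))] Hb'.
have E3 := @rhoT_sum _ _ _ _ _ hopf proj B _ _ (nu C w) (rep (nu C w)) Hb (repP _).
have gZ : forall a x, gam (a *: x) l = a *: gam x l := fun a x => linZ (gam_lin1 l) a x.
have gS : forall (I : Type) (r : seq I) F, gam (\sum_(i <- r) F i) l = \sum_(i <- r) gam (F i) l
  := fun I r F => lin_sum (gam_lin1 l) r F.
rewrite /rharp gS; under eq_bigr do rewrite gZ.
transitivity (\sum_(p <- rhoT (M:=C) w) hs p.1 *: tv (nu C p.2) (epsL hopf)).
  rewrite E2; first by rewrite big_seq1.
  by move=> hs'; rewrite /slice big_seq1.
transitivity (\sum_(p <- dm_rho (nu C w)) hs p.1 *: tv p.2 (epsL hopf)).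
  by rewrite E.
rewrite E3 repP /slice; apply: eq_bigr => p _; rewrite /Bt.
under eq_bigr do rewrite tvalT /= scalerA.
rewrite -scaler_suml; congr (_ *: _).
have -> : sval hsL p.1 = hs p.1 by [].
rewrite -{2}(counit2 hopf p.1) (kform_sum Hhs); apply: eq_bigr => q _.
by rewrite (kformZ Hhs) mulrC.
Qed.

Lemma gam_harp h l : gam (rharp D h hs) l = gam h (lharp D hs l).
Proof. by rewrite stepA stepB. Qed.

End Harp.

Lemma gam_cond : gamma_condition D eps gam.
Proof.
split; first by move=> a x y l; apply: (gam_lin1 l).
split; first by move=> h a x y; apply: (gam_lin2 h).
split; first by move=> h hs Hhs l; apply: gam_harp.
split; first exact: gam_center.
exact: gam_counit.
Qed.

End OneTwo.

Theorem corollary3p7p1 (k : comNzRingType) (H : algType k)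
    (D : H -> seq (H * H)) (eps : H -> k) (S : H -> H) :
  is_hopf D eps S -> projective_module H ->
  (forgetful_separable D eps <->
   exists gamma : H -> H -> H, gamma_condition D eps gamma).
Proof.
move=> hopf proj; split.
  case=> Pm [HP1 [HP2 HP3]].
  exists (gam hopf proj Pm).
  exact: (gam_cond hopf proj HP1 HP2 HP3).
case=> gamma Hg; exact: (two_one proj Hg).
Qed.
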